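(* Let $R$ be a compact Hausdorff topological semiring and let $A$ be a closed ideal of $R$. Then the relation $\kappa_A=\{(x,y)\in R\times R\mid \exists a,b\in A:\ x+a=y+b\}$ is closed in $R\times R$.
   Context: A semiring is an algebra $(R,+,\cdot,0)$ such that $(R,+,0)$ is a commutative monoid, $(R,\cdot)$ is a semigroup (no multiplicative identity is required), multiplication distributes over addition on both sides, and $0\cdot x = x\cdot 0 = 0$ for all $x\in R$. A topological semiring is a semiring with a topology in which addition and multiplication are continuous. An ideal of $R$ is a submonoid $A$ of $(R,+,0)$ with $RA\cup AR\subseteq A$. *)

(* Defs.v *)
From HB Require Import structures.
From mathcomp Require Import all_boot all_order.
From mathcomp Require Import all_classical topology.
Set Implicit Arguments. Unset Strict Implicit. Unset Printing Implicit Defensive.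
Local Open Scope classical_set_scope.

Definition is_semiring (T : Type) (add mul : T -> T -> T) (zero : T) : Prop :=
  [/\ (forall x y z, add x (add y z) = add (add x y) z),
      (forall x y, add x y = add y x),
      (forall x, add zero x = x),
      (forall x y z, mul x (mul y z) = mul (mul x y) z) &
      [/\ (forall x y z, mul x (add y z) = add (mul x y) (mul x z)),
           (forall x y z, mul (add x y) z = add (mul x z) (mul y z)) &
           (forall x, mul zero x = zero /\ mul x zero = zero)]].

Definition is_topological_semiring (T : topologicalType)
    (add mul : T -> T -> T) (zero : T) : Prop :=
  [/\ is_semiring add mul zero,
      continuous (fun p : T * T => add p.1 p.2) &
      continuous (fun p : T * T => mul p.1 p.2)].

Definition is_ideal (T : Type) (add mul : T -> T -> T) (zero : T)
    (A : set T) : Prop :=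
  [/\ A zero,
      (forall a b, A a -> A b -> A (add a b)) &
      (forall r a, A a -> A (mul r a) /\ A (mul a r))].

Definition kappa (T : Type) (add : T -> T -> T) (A : set T) : set (T * T) :=
  [set p | exists a b, A a /\ A b /\ add p.1 a = add p.2 b].

(* Main.v *)
Require Import Defs.
From mathcomp Require Import all_boot all_order.
From mathcomp Require Import all_classical topology.
Local Open Scope classical_set_scope.

Lemma cfst (U V : topologicalType) : continuous (@fst U V).
Proof. by move=> x; exact: cvg_fst. Qed.
Lemma csnd (U V : topologicalType) : continuous (@snd U V).
Proof. by move=> x; exact: cvg_snd. Qed.

Lemma cpair (W U V : topologicalType) (f : W -> U) (g : W -> V) :
  continuous f -> continuous g -> continuous (fun x => (f x, g x)).
Proof. by move=> cf cg x; apply: cvg_pair; [exact: cf|exact: cg]. Qed.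

Lemma closed_eqz (W U : topologicalType) (f g : W -> U) :
  hausdorff_space U -> continuous f -> continuous g ->
  closed [set x | f x = g x].
Proof.
move=> hU cf cg; rewrite open_hausdorff in hU; rewrite closedE => p Hp /=.
apply/eqP/negPn/negP => /hU [[A B] /= [fA gB] [oA oB /eqP AB]].
apply: Hp.
have nA : \forall q \near p, A (f q).
  by apply: cf; apply: open_nbhs_nbhs; split => //; rewrite -inE.
have nB : \forall q \near p, B (g q).
  by apply: cg; apply: open_nbhs_nbhs; split => //; rewrite -inE.
near=> q => e.
have : (A `&` B) (f q) by split; [exact: (near nA q)| rewrite e; exact: (near nB q)].
by rewrite AB.
Unshelve. all: by end_near.
Qed.

Lemma hausX (U V : topologicalType) :
  hausdorff_space U -> hausdorff_space V -> hausdorff_space (U * V)%type.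
Proof.
move=> hU hV; rewrite open_hausdorff in hU; rewrite open_hausdorff in hV; rewrite open_hausdorff => p q pq.
have [e1|n1] := eqVneq p.1 q.1.
  have n2 : p.2 != q.2.
    by apply: contraNneq pq => e2; by move: e1 e2; case: p => ? ?; case: q => ? ? /= -> ->.
  move: n2 => /hV [[A B] /= [pA qB] [oA oB /eqP AB]].
  exists (snd @^-1` A, snd @^-1` B); first by split; rewrite inE /=; rewrite -inE.
  split; [apply: open_comp => // x _; exact: csnd|apply: open_comp => // x _; exact: csnd|].
  by apply/eqP; rewrite -preimage_setI AB preimage_set0.
move: n1 => /hU [[A B] /= [pA qB] [oA oB /eqP AB]].
exists (fst @^-1` A, fst @^-1` B); first by split; rewrite inE /=; rewrite -inE.
split; [apply: open_comp => // x _; exact: cfst|apply: open_comp => // x _; exact: cfst|].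
by apply/eqP; rewrite -preimage_setI AB preimage_set0.
Qed.
Theorem lemma3p2 (T : topologicalType) (add mul : T -> T -> T) (zero : T)
    (A : set T) :
  is_topological_semiring add mul zero ->
  compact [set: T] -> hausdorff_space T ->
  closed A -> is_ideal add mul zero A ->
  closed (kappa add A).
Proof.
move=> [_ cadd _] cT hT cA _.
pose K := [set q : (T * T) * (T * T) | add q.1.1 q.2.1 = add q.1.2 q.2.2]
  `&` ((fun q : (T * T) * (T * T) => q.2.1) @^-1` A)
  `&` ((fun q : (T * T) * (T * T) => q.2.2) @^-1` A).
have ck : kappa add A = fst @` K.
  apply/seteqP; split.
    move=> [x y] [a [b [Aa [Ab e]]]]; exists ((x, y), (a, b)) => //.
  by move=> _ [[[x y] [a b]] [[/= e Aa] Ab] <-]; exists a, b.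
have cW : compact [set: (T * T) * (T * T)].
  by rewrite -!setXTT; apply: compact_setX; apply: compact_setX.
have cK : closed K.
  apply: closedI; first apply: closedI.
  - apply: closed_eqz => //.
    + move=> x; apply: (continuous_comp (f := fun q : (T*T)*(T*T) => (q.1.1, q.2.1))
          (g := fun p : T * T => add p.1 p.2)); last exact: cadd.
      by apply: cpair => y; apply: continuous_comp; [exact: cfst|exact: cfst|exact: csnd|exact: cfst].
    + move=> x; apply: (continuous_comp (f := fun q : (T*T)*(T*T) => (q.1.2, q.2.2))
          (g := fun p : T * T => add p.1 p.2)); last exact: cadd.
      by apply: cpair => y; apply: continuous_comp; [exact: cfst|exact: csnd|exact: csnd|exact: csnd].
  - apply: preimage_closed => // x _; apply: continuous_comp; [exact: csnd|exact: cfst].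
  - apply: preimage_closed => // x _; apply: continuous_comp; [exact: csnd|exact: csnd].
rewrite ck; apply: compact_closed; first exact: hausX.
apply: continuous_compact.
  by apply: continuous_subspaceT => x; exact: cfst.
exact: subclosed_compact cK cW _.
Qed.
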